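(* Let $n\in\mathbb N_0$, $a\in I$ and $L\in C^{[n]}(I^2)$. Define $\ell(s)=\int_a^sL(s,t)e^{i\kappa t}\,dt$, $r(s)=-e^{i\kappa a}\sigma_n[L(s,\cdot)](a)$ and $g(s)=[\ell(s)-r(s)]e^{-i\kappa s}$ for $s\in I$. Then for every $l\in\{0,1,\dots,n\}$ and $s\in I$, $$g^{(l)}(s)=-\sum_{(q,p)\in\mathbb U_{n,l}}C_l^p(-i\kappa)^{l-1-p-q}L^{(p,q)}(s,s)+\sum_{p=0}^lC_l^p(-i\kappa)^{l-p-n}\int_a^sL^{(p,n)}(s,t)e^{i\kappa(t-s)}\,dt.$$
   Context: $I=[-1,1]$, $\kappa>1$. $C^{[n]}(I^2)$ is the space of functions on $I^2$ whose partial derivatives $L^{(\alpha,\beta)}=\partial_s^\alpha\partial_t^\beta L$ with $\alpha,\beta\le n$ are continuous. For a function $u$ of one variable, $\sigma_n[u](t)=\sum_{j=0}^{n-1}\frac{(-1)^j}{(i\kappa)^{j+1}}u^{(j)}(t)$ (empty sum $=0$ if $n=0$). $C_l^p=\frac{l!}{p!(l-p)!}$. $\mathbb U_{n,l}=\{(q,p):q\in\{0,\dots,n-1\},\ p\in\{0,\dots,l\},\ q+p\ge l\}$. *)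

(* Defs.v *)
From Stdlib Require Import Reals ZArith List.
From Coquelicot Require Import Coquelicot.
Open Scope R_scope.

Definition inI (x : R) : Prop := -1 <= x <= 1.

Definition cis (x : R) : C := (cos x, sin x).

Definition Cpowz (z : C) (k : Z) : C :=
  if (0 <=? k)%Z then Cpow z (Z.to_nat k) else Cinv (Cpow z (Z.to_nat (- k))).

Definition csum (m : nat) (f : nat -> C) : C :=
  fold_right Cplus (RtoC 0) (map f (seq 0 m)).

(* f : R -> C has derivative l at s relative to I (one-sided at the endpoints) *)
Definition is_derive_I (f : R -> C) (s : R) (l : C) : Prop :=
  filterlim (fun t => scal (/ (t - s)) (minus (f t) (f s)))
    (within (fun t => inI t /\ t <> s) (locally s)) (locally l).

Definition derivs_I (f : R -> C) (k : nat) (F : nat -> R -> C) : Prop :=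
  (forall s, inI s -> F O s = f s) /\
  (forall j s, (j < k)%nat -> inI s -> is_derive_I (F j) s (F (S j) s)).

Definition continuous_I2 (F : R -> R -> C) : Prop :=
  forall s t, inI s -> inI t ->
    filterlim (fun p : R * R => F (fst p) (snd p))
      (within (fun p : R * R => inI (fst p) /\ inI (snd p)) (locally (s, t)))
      (locally (F s t)).

(* L in C^{[n]}(I^2) with Lp a b = d_s^a d_t^b L (a, b <= n), all continuous on I^2 *)
Definition Cn_I2 (n : nat) (L : R -> R -> C) (Lp : nat -> nat -> R -> R -> C) : Prop :=
  (forall s t, inI s -> inI t -> Lp O O s t = L s t) /\
  (forall b s t, (b < n)%nat -> inI s -> inI t ->
       is_derive_I (fun t' => Lp O b s t') t (Lp O (S b) s t)) /\
  (forall a b s t, (a < n)%nat -> (b <= n)%nat -> inI s -> inI t ->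
       is_derive_I (fun s' => Lp a b s' t) s (Lp (S a) b s t)) /\
  (forall a b, (a <= n)%nat -> (b <= n)%nat -> continuous_I2 (Lp a b)).

(* sigma_n[u](t) given the derivatives du j = u^{(j)} *)
Definition sigma_n (kappa : R) (n : nat) (du : nat -> R -> C) (t : R) : C :=
  csum n (fun j => Cmult (Cdiv (Cpow (RtoC (-1)) j) (Cpow (0, kappa) (S j))) (du j t)).

(* Main.v *)
Require Import Defs.
From Stdlib Require Import Reals ZArith List.
From Coquelicot Require Import Coquelicot.
From Stdlib Require Import Lra Lia Classical ClassicalEpsilon FunctionalExtensionality.
Open Scope R_scope.

Lemma Cmod_scal_quot (a b l : C) (h : R) : h <> 0 ->
  Cmod (a - b - RtoC h * l)%C = Rabs h * Cmod (RtoC (/ h) * (a - b) - l)%C.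
Proof.
  intros H. rewrite <- Cmod_R, <- Cmod_mult. f_equal.
  assert (Hn : RtoC h <> 0%C). { intro E. apply RtoC_inj in E. auto. }
  rewrite RtoC_inv by auto. field. auto.
Qed.

Definition Dr (f : R -> C) (s : R) (l : C) : Prop :=
  forall eps, 0 < eps -> exists del, 0 < del /\ forall t, inI t -> Rabs (t - s) < del ->
    Cmod (f t - f s - RtoC (t - s)%R * l)%C <= eps * Rabs (t - s).

Lemma scal_minus_eq (r : R) (a b l : C) :
  @minus (NormedModule.AbelianGroup R_AbsRing C_R_NormedModule)
          (@scal R_Ring (prod_ModuleSpace R_Ring R_ModuleSpace R_ModuleSpace) r (@minus C_AbelianGroup a b)) l
     = (RtoC r * (a - b) - l)%C.
Proof.
  destruct a, b, l. unfold scal, minus, plus, opp; simpl. unfold prod_scal, prod_plus, prod_opp; simpl.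
  unfold scal, plus, opp, mult; simpl. unfold Cminus, Cplus, Copp, Cmult, RtoC; simpl. unfold mult; simpl. f_equal; ring.
Qed.

Lemma Dr_is_derive_I f s l : Dr f s l -> is_derive_I f s l.
Proof.
  intros HD. unfold is_derive_I. apply (proj2 (@filterlim_locally_ball_norm _ _ C_R_NormedModule _ _ _ _)).
  intros eps. destruct (HD (eps/2)) as [del [Hdel H]]. { destruct eps; simpl; lra. }
  exists (mkposreal del Hdel). intros t Hb [HtI Hts]. change (Rabs (t - s) < del) in Hb.
  unfold ball_norm. rewrite <- Cmod_norm.
  specialize (H t HtI Hb). rewrite Cmod_scal_quot in H by lra.
  assert (Hp : 0 < Rabs (t - s)) by (apply Rabs_pos_lt; lra).
  assert (Cmod (RtoC (/ (t - s)) * (f t - f s) - l)%C <= eps / 2).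
  { apply Rmult_le_reg_l with (Rabs (t - s)); auto. lra. }
  rewrite scal_minus_eq. destruct eps; simpl in *; lra.
Qed.

Lemma is_derive_I_Dr f s l : is_derive_I f s l -> Dr f s l.
Proof.
  intros HD eps Heps. unfold is_derive_I in HD. apply (proj1 (@filterlim_locally_ball_norm _ _ C_R_NormedModule _ _ _ _)) with (eps := mkposreal eps Heps) in HD.
  destruct HD as [[del Hdel] H]. exists del. split; auto. intros t HtI Hb.
  destruct (Req_dec t s) as [E|E].
  { subst. replace (f s - f s - RtoC (s - s)%R * l)%C with (RtoC 0) by (rewrite Rminus_diag; ring).
    rewrite Cmod_0, Rminus_diag, Rabs_R0. lra. }
  specialize (H t Hb (conj HtI E)). unfold ball_norm in H. rewrite <- Cmod_norm, scal_minus_eq in H.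
  simpl in H. rewrite Cmod_scal_quot by lra.
  assert (0 <= Rabs (t-s)) by apply Rabs_pos. nra.
Qed.

Definition Cont2 (F : R -> R -> C) : Prop :=
  forall s t, inI s -> inI t -> forall eps, 0 < eps -> exists del, 0 < del /\
    forall x y, inI x -> inI y -> Rabs (x - s) < del -> Rabs (y - t) < del ->
      Cmod (F x y - F s t)%C < eps.

Lemma continuous_I2_Cont2 F : continuous_I2 F -> Cont2 F.
Proof.
  intros HF s t Hs Ht eps Heps. specialize (HF s t Hs Ht).
  apply (proj1 (@filterlim_locally_ball_norm _ _ C_R_NormedModule _ _ _ _)) with (eps := mkposreal eps Heps) in HF.
  destruct HF as [[del Hdel] H]. exists del. split; auto. intros x y Hx Hy Hxs Hyt.
  specialize (H (x, y)). simpl in H. unfold ball_norm in H. rewrite <- Cmod_norm in H.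
  apply H. split; assumption. split; assumption.
Qed.

Lemma Cmod_sub_tri (a b c : C) : Cmod (a - c)%C <= Cmod (a - b)%C + Cmod (b - c)%C.
Proof. replace (a - c)%C with ((a - b) + (b - c))%C by ring. apply Cmod_triangle. Qed.

Lemma Cmod_sub_sym (a b : C) : Cmod (a - b)%C = Cmod (b - a)%C.
Proof. replace (a - b)%C with (- (b - a))%C by ring. apply Cmod_opp. Qed.

Lemma Cmod_minus_le (a b : C) : Cmod (a - b)%C <= Cmod a + Cmod b.
Proof. unfold Cminus. eapply Rle_trans. apply Cmod_triangle. rewrite Cmod_opp. lra. Qed.

Lemma tube F s : Cont2 F -> inI s -> forall eps, 0 < eps -> exists del, 0 < del /\
  forall x t, inI x -> inI t -> Rabs (x - s) < del -> Cmod (F x t - F s t)%C < eps.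
Proof.
  intros HF Hs eps Heps.
  assert (H : forall t, {d : posreal | inI t -> forall x y, inI x -> inI y -> Rabs (x - s) < d -> Rabs (y - t) < d ->
      Cmod (F x y - F s t)%C < eps / 2}).
  { intro t. apply constructive_indefinite_description.
    destruct (classic (inI t)) as [Ht|Ht].
    - destruct (HF s t Hs Ht (eps/2)) as [d [Hd Hd']]. lra. exists (mkposreal d Hd). intros _; exact Hd'.
    - exists (mkposreal 1 Rlt_0_1). intro; contradiction. }
  destruct (compactness_value_1d (-1) 1 (fun t => proj1_sig (H t))) as [d Hd].
  exists d. split. apply cond_pos. intros x t Hx Ht Hxs.
  apply NNPP. intro Hn. apply (Hd t Ht). intros [u [Hu [Htu Hdu]]].
  apply Hn. destruct (H u) as [du Hdu'] eqn:E. simpl in Htu, Hdu.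
  assert (H1 := Hdu' Hu x t Hx Ht ltac:(lra) Htu).
  assert (H2 := Hdu' Hu s t Hs Ht ltac:(rewrite Rminus_diag, Rabs_R0; apply cond_pos) Htu).
  rewrite Cmod_sub_sym in H2. pose proof (Cmod_sub_tri (F x t) (F s u) (F s t)). lra.
Qed.

Definition clamp (x : R) : R := Rmax (-1) (Rmin 1 x).

Lemma clamp_I x : inI (clamp x).
Proof. unfold inI, clamp, Rmax, Rmin; repeat destruct Rle_dec; lra. Qed.
Lemma clamp_id x : inI x -> clamp x = x.
Proof. unfold inI, clamp, Rmax, Rmin; repeat destruct Rle_dec; lra. Qed.
Lemma clamp_lip x y : Rabs (clamp x - clamp y) <= Rabs (x - y).
Proof. unfold clamp, Rmax, Rmin; repeat destruct Rle_dec; unfold Rabs; repeat destruct Rcase_abs; lra. Qed.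

Lemma Dr_cont f s l : Dr f s l -> forall eps, 0 < eps -> exists del, 0 < del /\
  forall t, inI t -> Rabs (t - s) < del -> Cmod (f t - f s)%C < eps.
Proof.
  intros HD eps Heps. destruct (HD 1 Rlt_0_1) as [d [Hd H]].
  pose proof (Cmod_ge_0 l).
  exists (Rmin d (eps / (Cmod l + 2))). split.
  { apply Rmin_pos; auto. apply Rdiv_lt_0_compat; lra. }
  intros t Ht Hts. assert (Hts1 : Rabs (t - s) < d) by (eapply Rlt_le_trans; [apply Hts| apply Rmin_l]).
  assert (Hts2 : Rabs (t - s) < eps / (Cmod l + 2)) by (eapply Rlt_le_trans; [apply Hts| apply Rmin_r]).
  specialize (H t Ht Hts1).
  replace (f t - f s)%C with ((f t - f s - RtoC (t - s) * l) + RtoC (t - s) * l)%C by ring.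
  eapply Rle_lt_trans. apply Cmod_triangle. rewrite Cmod_mult, Cmod_R.
  assert (0 <= Rabs (t - s)) by apply Rabs_pos.
  assert (Rabs (t - s) * (Cmod l + 2) < eps).
  { apply Rmult_lt_reg_r with (/ (Cmod l + 2)). apply Rinv_0_lt_compat; lra.
    rewrite Rmult_assoc, Rinv_r by lra. lra. }
  nra.
Qed.

Lemma Cmod_le_sum (z : C) : Cmod z <= Rabs (fst z) + Rabs (snd z).
Proof.
  destruct z as [x y]. unfold Cmod; simpl. apply Rsqr_incr_0_var.
  - rewrite Rsqr_sqrt. unfold Rsqr. rewrite Rmult_1_r, Rmult_1_r.
    assert (0 <= Rabs x * Rabs y) by (apply Rmult_le_pos; apply Rabs_pos).
    replace (x * x) with (Rabs x * Rabs x) by (unfold Rabs; destruct Rcase_abs; ring).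
    replace (y * y) with (Rabs y * Rabs y) by (unfold Rabs; destruct Rcase_abs; ring). nra.
    nra.
  - pose proof (Rabs_pos x); pose proof (Rabs_pos y); lra.
Qed.

Lemma MVI_comp (pr : C -> R) f d s s' M :
  (forall z w, pr (z - w)%C = pr z - pr w) -> (forall (r : R) z, pr (RtoC r * z)%C = r * pr z) ->
  (forall z, Rabs (pr z) <= Cmod z) ->
  inI s -> inI s' -> (forall x, Rmin s s' <= x <= Rmax s s' -> Dr f x (d x)) ->
  (forall x, Rmin s s' <= x <= Rmax s s' -> Cmod (d x) <= M) ->
  Rabs (pr (f s') - pr (f s)) <= M * Rabs (s' - s).
Proof.
  intros Hm Hs Hb Hs0 Hs1 HD HM.
  set (g := fun x => pr (f (clamp x))).
  destruct (MVT_gen g s s' (fun x => pr (d x))) as [c [Hc E]].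
  - intros x Hx. apply is_derive_Reals. intros eps Heps.
    assert (HxI : -1 < x < 1).
    { unfold inI in *. unfold Rmin, Rmax in Hx; destruct Rle_dec in Hx; lra. }
    destruct (HD x ltac:(lra) (eps/2) ltac:(lra)) as [del [Hdel H]].
    assert (Hp : 0 < Rmin del (Rmin (1 - x) (x + 1))).
    { repeat apply Rmin_pos; lra. }
    exists (mkposreal _ Hp). intros h Hh0 Hh. simpl in Hh.
    assert (Hh1 := Rlt_le_trans _ _ _ Hh (Rmin_l _ _)).
    assert (Hh2 := Rlt_le_trans _ _ _ Hh (Rle_trans _ _ _ (Rmin_r _ _) (Rmin_l _ _))).
    assert (Hh3 := Rlt_le_trans _ _ _ Hh (Rle_trans _ _ _ (Rmin_r _ _) (Rmin_r _ _))).
    assert (HI : inI (x + h)) by (unfold inI; unfold Rabs in *; destruct Rcase_abs; lra).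
    specialize (H (x + h) HI ltac:(replace (x + h - x) with h by ring; auto)).
    unfold g. rewrite !clamp_id by (auto; unfold inI; lra).
    replace (x + h - x) with h in H by ring.
    assert (Hpr : pr (f (x + h)) - pr (f x) - h * pr (d x) = pr (f (x + h)%R - f x - RtoC h * d x)%C).
    { rewrite !Hm, Hs. ring. }
    assert (Habs : 0 < Rabs h) by (apply Rabs_pos_lt; auto).
    replace ((pr (f (x + h)) - pr (f x)) / h - pr (d x)) with
       ((pr (f (x + h)) - pr (f x) - h * pr (d x)) / h) by (field; auto).
    rewrite Hpr. unfold Rdiv. rewrite Rabs_mult, Rabs_inv.
    apply Rmult_lt_reg_r with (Rabs h); auto. rewrite Rmult_assoc, Rinv_l by lra.
    specialize (Hb (f (x + h)%R - f x - RtoC h * d x)%C). assert (eps/2 * Rabs h < eps * Rabs h) by nra. lra.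
  - intros x Hx. assert (HxI : inI x).
    { unfold inI in *. unfold Rmin, Rmax in Hx; destruct Rle_dec in Hx; lra. }
    unfold continuity_pt, continue_in, limit1_in, limit_in. simpl. unfold R_dist.
    intros eps Heps. destruct (Dr_cont _ _ _ (HD x Hx) eps Heps) as [del [Hdel H]].
    exists del. split; auto. intros y [_ Hy]. unfold g. rewrite (clamp_id x HxI).
    rewrite <- Hm. eapply Rle_lt_trans. apply Hb. apply H. apply clamp_I.
    pose proof (clamp_lip y x) as Hl. rewrite (clamp_id x HxI) in Hl. lra.
  - unfold g in E. rewrite !clamp_id in E by auto. rewrite E, Rabs_mult.
    apply Rmult_le_compat_r. apply Rabs_pos. eapply Rle_trans. apply Hb. apply HM. auto.
Qed.

Lemma MVI f d s s' M :
  inI s -> inI s' -> (forall x, Rmin s s' <= x <= Rmax s s' -> Dr f x (d x)) ->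
  (forall x, Rmin s s' <= x <= Rmax s s' -> Cmod (d x) <= M) ->
  Cmod (f s' - f s)%C <= 2 * M * Rabs (s' - s).
Proof.
  intros Hs Hs' HD HM.
  assert (H1 := MVI_comp fst f d s s' M ltac:(intros [] []; reflexivity)
     ltac:(intros r []; simpl; ring) ltac:(intros z; apply re_le_Cmod) Hs Hs' HD HM).
  assert (H2 := MVI_comp snd f d s s' M ltac:(intros [] []; reflexivity)
     ltac:(intros r []; simpl; ring) ltac:(intros z; eapply Rle_trans; [apply Rmax_r | apply Rmax_Cmod]) Hs Hs' HD HM).
  eapply Rle_trans. apply Cmod_le_sum.
  replace (fst (f s' - f s)%C) with (fst (f s') - fst (f s)) by (destruct (f s'), (f s); simpl; ring).
  replace (snd (f s' - f s)%C) with (snd (f s') - snd (f s)) by (destruct (f s'), (f s); simpl; ring).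
  lra.
Qed.

Lemma between_I s s' x : inI s -> inI s' -> Rmin s s' <= x <= Rmax s s' -> inI x.
Proof. unfold inI, Rmin, Rmax; destruct Rle_dec; lra. Qed.

Lemma Dr_zero_const f a b : (forall x, inI x -> Dr f x 0%C) -> inI a -> inI b -> f a = f b.
Proof.
  intros HD Ha Hb. assert (H := MVI f (fun _ => 0%C) a b 0 Ha Hb
    ltac:(intros x Hx; apply HD; apply (between_I a b); auto) ltac:(intros; cbv beta; rewrite Cmod_0; lra)).
  assert (Cmod (f b - f a)%C = 0) by (pose proof (Cmod_ge_0 (f b - f a)%C); lra).
  apply Cmod_eq_0 in H0. symmetry. replace (f b) with ((f b - f a) + f a)%C by ring. rewrite H0. ring.
Qed.

Lemma Dr_unique f s l1 l2 : inI s -> Dr f s l1 -> Dr f s l2 -> l1 = l2.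
Proof.
  intros Hs H1 H2. apply NNPP. intro Hne.
  assert (Hm : 0 < Cmod (l1 - l2)%C) by (apply Cmod_gt_0; intro E; apply Hne;
     replace l1 with ((l1 - l2) + l2)%C by ring; rewrite E; ring).
  set (m := Cmod (l1 - l2)%C) in *.
  destruct (H1 (m/4) ltac:(lra)) as [d1 [Hd1 K1]]. destruct (H2 (m/4) ltac:(lra)) as [d2 [Hd2 K2]].
  set (h := Rmin 1 (Rmin d1 d2) / 2).
  assert (Hh : 0 < h). { unfold h. assert (0 < Rmin 1 (Rmin d1 d2)) by (repeat apply Rmin_pos; lra). lra. }
  assert (Hh1 : h <= 1/2). { unfold h. pose proof (Rmin_l 1 (Rmin d1 d2)). lra. }
  assert (Hhd1 : h < d1). { unfold h. pose proof (Rmin_r 1 (Rmin d1 d2)). pose proof (Rmin_l d1 d2). lra. }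
  assert (Hhd2 : h < d2). { unfold h. pose proof (Rmin_r 1 (Rmin d1 d2)). pose proof (Rmin_r d1 d2). lra. }
  set (t := if Rle_dec s 0 then s + h else s - h).
  assert (Ht : inI t) by (unfold t, inI in *; destruct Rle_dec; lra).
  assert (Hts : Rabs (t - s) = h) by (unfold t; destruct Rle_dec;
     [replace (s + h - s) with h by ring | replace (s - h - s) with (- h) by ring; rewrite Rabs_Ropp]; apply Rabs_right; lra).
  specialize (K1 t Ht ltac:(lra)). specialize (K2 t Ht ltac:(lra)). rewrite Hts in K1, K2.
  assert (E : Cmod (RtoC (t - s)%R * (l1 - l2))%C <= m / 2 * h).
  { replace (RtoC (t - s)%R * (l1 - l2))%C with ((f t - f s - RtoC (t - s)%R * l2) - (f t - f s - RtoC (t - s)%R * l1))%C by ring.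
    eapply Rle_trans. apply Cmod_minus_le. lra. }
  rewrite Cmod_mult, Cmod_R, Hts in E. fold m in E. nra.
Qed.

Lemma frac_le x e : 0 <= x -> 0 < e -> x * (e / (x + 1)) <= e.
Proof.
  intros. assert (H1: e / (x+1) * (x+1) = e) by (field; lra).
  assert (0 <= e/(x+1)) by (apply Rlt_le, Rdiv_lt_0_compat; lra). nra.
Qed.

Lemma Dr_ext f g s l : inI s -> (forall t, inI t -> f t = g t) -> Dr f s l -> Dr g s l.
Proof.
  intros Hs E HD eps Heps. destruct (HD eps Heps) as [d [Hd H]]. exists d; split; auto.
  intros t Ht Hts. rewrite <- !E by auto. auto.
Qed.

Lemma Dr_const (c : C) s : Dr (fun _ => c) s 0%C.
Proof.
  intros eps Heps. exists 1. split; [lra|]. intros t _ _. cbv beta.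
  replace (c - c - RtoC (t - s)%R * 0)%C with (RtoC 0) by ring. rewrite Cmod_0.
  pose proof (Rabs_pos (t - s)). nra.
Qed.

Lemma Dr_plus f g s a b : Dr f s a -> Dr g s b -> Dr (fun x => f x + g x)%C s (a + b)%C.
Proof.
  intros Hf Hg eps Heps. destruct (Hf (eps/2) ltac:(lra)) as [d1 [Hd1 H1]].
  destruct (Hg (eps/2) ltac:(lra)) as [d2 [Hd2 H2]].
  exists (Rmin d1 d2). split. apply Rmin_pos; auto. intros t Ht Hts.
  specialize (H1 t Ht (Rlt_le_trans _ _ _ Hts (Rmin_l _ _))).
  specialize (H2 t Ht (Rlt_le_trans _ _ _ Hts (Rmin_r _ _))).
  replace (f t + g t - (f s + g s) - RtoC (t - s)%R * (a + b))%C with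
    ((f t - f s - RtoC (t - s)%R * a) + (g t - g s - RtoC (t - s)%R * b))%C by ring.
  eapply Rle_trans. apply Cmod_triangle. lra.
Qed.

Lemma Dr_scal (k : C) f s a : Dr f s a -> Dr (fun x => k * f x)%C s (k * a)%C.
Proof.
  intros Hf eps Heps. pose proof (Cmod_ge_0 k).
  destruct (Hf (eps / (Cmod k + 1)) ltac:(apply Rdiv_lt_0_compat; lra)) as [d [Hd Hf2]].
  exists d. split; auto. intros t Ht Hts. specialize (Hf2 t Ht Hts).
  replace (k * f t - k * f s - RtoC (t - s)%R * (k * a))%C with (k * (f t - f s - RtoC (t - s)%R * a))%C by ring.
  rewrite Cmod_mult. pose proof (Rabs_pos (t - s)).
  assert (Cmod k * (eps / (Cmod k + 1)) <= eps).
  { apply frac_le; auto. }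
  apply Rle_trans with (Cmod k * (eps / (Cmod k + 1) * Rabs (t - s))).
  apply Rmult_le_compat_l; auto. nra.
Qed.

Lemma Dr_minus f g s a b : Dr f s a -> Dr g s b -> Dr (fun x => f x - g x)%C s (a - b)%C.
Proof.
  intros Hf Hg eps Heps. destruct (Hf (eps/2) ltac:(lra)) as [d1 [Hd1 H1]].
  destruct (Hg (eps/2) ltac:(lra)) as [d2 [Hd2 H2]].
  exists (Rmin d1 d2). split. apply Rmin_pos; auto. intros t Ht Hts.
  specialize (H1 t Ht (Rlt_le_trans _ _ _ Hts (Rmin_l _ _))).
  specialize (H2 t Ht (Rlt_le_trans _ _ _ Hts (Rmin_r _ _))).
  replace (f t - g t - (f s - g s) - RtoC (t - s)%R * (a - b))%C with
    ((f t - f s - RtoC (t - s)%R * a) - (g t - g s - RtoC (t - s)%R * b))%C by ring.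
  eapply Rle_trans. apply Cmod_minus_le. lra.
Qed.

Lemma Dr_mult f g s a b : Dr f s a -> Dr g s b -> Dr (fun x => f x * g x)%C s (a * g s + f s * b)%C.
Proof.
  intros Hf Hg eps Heps.
  pose proof (Cmod_ge_0 a) as Pa. pose proof (Cmod_ge_0 (f s)) as Pf. pose proof (Cmod_ge_0 (g s)) as Pg.
  set (M := Cmod (g s) + 1).
  destruct (Hf (eps / 3 / M) ltac:(unfold M; apply Rdiv_lt_0_compat; lra)) as [d1 [Hd1 H1]].
  destruct (Hg (eps / 3 / (Cmod (f s) + 1)) ltac:(apply Rdiv_lt_0_compat; lra)) as [d2 [Hd2 H2]].
  destruct (Dr_cont _ _ _ Hg (Rmin 1 (eps / 3 / (Cmod a + 1))) ltac:(apply Rmin_pos; [lra| apply Rdiv_lt_0_compat; lra]))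
    as [d3 [Hd3 H3]].
  exists (Rmin d1 (Rmin d2 d3)). split. repeat apply Rmin_pos; auto. intros t Ht Hts.
  specialize (H1 t Ht (Rlt_le_trans _ _ _ Hts (Rmin_l _ _))).
  specialize (H2 t Ht (Rlt_le_trans _ _ _ Hts (Rle_trans _ _ _ (Rmin_r _ _) (Rmin_l _ _)))).
  specialize (H3 t Ht (Rlt_le_trans _ _ _ Hts (Rle_trans _ _ _ (Rmin_r _ _) (Rmin_r _ _)))).
  set (h := RtoC (t - s)%R).
  replace (f t * g t - f s * g s - h * (a * g s + f s * b))%C with
    ((f t - f s - h * a) * g t + h * a * (g t - g s) + f s * (g t - g s - h * b))%C by ring.
  pose proof (Rabs_pos (t - s)) as Hh.
  assert (Hgt : Cmod (g t) <= M).
  { unfold M. replace (g t) with ((g t - g s) + g s)%C by ring. eapply Rle_trans. apply Cmod_triangle.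
    pose proof (Rmin_l 1 (eps / 3 / (Cmod a + 1))). lra. }
  assert (E1 : Cmod ((f t - f s - h * a) * g t)%C <= eps / 3 * Rabs (t - s)).
  { rewrite Cmod_mult. apply Rle_trans with (eps / 3 / M * Rabs (t - s) * M).
    apply Rmult_le_compat; auto using Cmod_ge_0. right. unfold M. field. lra. }
  assert (E2 : Cmod (h * a * (g t - g s))%C <= eps / 3 * Rabs (t - s)).
  { rewrite !Cmod_mult. unfold h. rewrite Cmod_R.
    assert (Cmod (g t - g s)%C <= eps / 3 / (Cmod a + 1)) by (pose proof (Rmin_r 1 (eps / 3 / (Cmod a + 1))); lra).
    assert (Cmod a * Cmod (g t - g s)%C <= eps / 3).
    { apply Rle_trans with (Cmod a * (eps / 3 / (Cmod a + 1))). apply Rmult_le_compat_l; auto.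
      apply frac_le; lra. }
    rewrite Rmult_assoc. rewrite (Rmult_comm (eps / 3)). apply Rmult_le_compat_l; auto. }
  assert (E3 : Cmod (f s * (g t - g s - h * b))%C <= eps / 3 * Rabs (t - s)).
  { rewrite Cmod_mult. apply Rle_trans with (Cmod (f s) * (eps / 3 / (Cmod (f s) + 1) * Rabs (t - s))).
    apply Rmult_le_compat_l; auto.
    assert (Cmod (f s) * (eps / 3 / (Cmod (f s) + 1)) <= eps / 3).
    { apply frac_le; lra. }
    nra. }
  eapply Rle_trans. apply Cmod_triangle. eapply Rle_trans. apply Rplus_le_compat_r. apply Cmod_triangle. lra.
Qed.

Lemma fold_Cplus_shift (l : list C) x y : fold_right Cplus (x + y)%C l = (fold_right Cplus x l + y)%C.
Proof. induction l; simpl. ring. rewrite IHl. ring. Qed.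

Lemma csum_0 f : csum 0 f = RtoC 0.
Proof. reflexivity. Qed.

Lemma csum_Sr m f : csum (S m) f = (csum m f + f m)%C.
Proof.
  unfold csum. rewrite seq_S, map_app, fold_right_app. simpl.
  replace (f m + 0)%C with (0 + f m)%C by ring. apply fold_Cplus_shift.
Qed.

Lemma csum_Sl m f : csum (S m) f = (f 0%nat + csum m (fun k => f (S k)))%C.
Proof. unfold csum. simpl. f_equal. rewrite <- seq_shift, map_map. reflexivity. Qed.

Lemma csum_ext m f g : (forall k, (k < m)%nat -> f k = g k) -> csum m f = csum m g.
Proof.
  induction m; intros H. reflexivity. rewrite !csum_Sr. rewrite (IHm ltac:(intros; apply H; lia)).
  rewrite H by lia. reflexivity.
Qed.

Lemma csum_plus m f g : csum m (fun k => f k + g k)%C = (csum m f + csum m g)%C.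
Proof. induction m. simpl. unfold csum; simpl; ring. rewrite !csum_Sr, IHm. ring. Qed.

Lemma csum_minus m f g : csum m (fun k => f k - g k)%C = (csum m f - csum m g)%C.
Proof. induction m. unfold csum; simpl; ring. rewrite !csum_Sr, IHm. ring. Qed.

Lemma csum_scal m k f : csum m (fun j => k * f j)%C = (k * csum m f)%C.
Proof. induction m. unfold csum; simpl; ring. rewrite !csum_Sr, IHm. ring. Qed.

Lemma csum_zero m : csum m (fun _ => RtoC 0) = RtoC 0.
Proof. induction m. reflexivity. rewrite csum_Sr, IHm. ring. Qed.

Lemma csum_telescope m d : csum m (fun j => d j - d (S j))%C = (d 0%nat - d m)%C.
Proof. induction m. unfold csum; simpl; ring. rewrite csum_Sr, IHm. ring. Qed.

Lemma Dr_csum m F F' s : (forall j, (j < m)%nat -> Dr (F j) s (F' j)) ->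
  Dr (fun x => csum m (fun j => F j x)) s (csum m F').
Proof.
  induction m; intros H.
  - unfold csum; simpl. apply Dr_const.
  - replace (fun x => csum (S m) (fun j => F j x)) with (fun x => (csum m (fun j => F j x) + F m x)%C)
      by (apply functional_extensionality; intro; rewrite csum_Sr; reflexivity).
    rewrite csum_Sr. apply Dr_plus. apply IHm; intros; apply H; lia. apply H; lia.
Qed.

Lemma Dr_of_real f s a1 a2 : derivable_pt_lim (fun x => fst (f x)) s a1 ->
  derivable_pt_lim (fun x => snd (f x)) s a2 -> Dr f s (a1, a2).
Proof.
  intros H1 H2 eps Heps.
  destruct (H1 (eps/2) ltac:(lra)) as [d1 K1]. destruct (H2 (eps/2) ltac:(lra)) as [d2 K2].
  exists (Rmin d1 d2). split. apply Rmin_pos; apply cond_pos. intros t Ht Hts.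
  destruct (Req_dec t s) as [E|E].
  { subst. replace (f s - f s - RtoC (s - s)%R * (a1, a2))%C with (RtoC 0) by (rewrite Rminus_diag; ring).
    rewrite Cmod_0, Rminus_diag, Rabs_R0. lra. }
  set (h := t - s). assert (Hh : h <> 0) by (unfold h; lra).
  assert (Hp : 0 < Rabs h) by (apply Rabs_pos_lt; auto).
  replace t with (s + h) by (unfold h; ring).
  specialize (K1 h Hh (Rlt_le_trans _ _ _ Hts (Rmin_l _ _))).
  specialize (K2 h Hh (Rlt_le_trans _ _ _ Hts (Rmin_r _ _))).
  replace (s + h - s) with h by ring.
  eapply Rle_trans. apply Cmod_le_sum.
  assert (E1 : fst (f (s + h)%R - f s - RtoC h * (a1, a2))%C = ((fst (f (s + h)) - fst (f s)) / h - a1) * h).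
  { destruct (f (s + h)), (f s). simpl. field. auto. }
  assert (E2 : snd (f (s + h)%R - f s - RtoC h * (a1, a2))%C = ((snd (f (s + h)) - snd (f s)) / h - a2) * h).
  { destruct (f (s + h)), (f s). simpl. field. auto. }
  rewrite E1, E2, !Rabs_mult. nra.
Qed.

Lemma Dr_cis k c s : Dr (fun x => cis (k * x + c)) s (Cmult (0, k) (cis (k * s + c))).
Proof.
  replace (Cmult (0, k) (cis (k * s + c))) with (- k * sin (k * s + c), k * cos (k * s + c))
    by (unfold cis, Cmult; simpl; f_equal; ring).
  apply Dr_of_real; simpl; apply is_derive_Reals; auto_derive; auto; ring.
Qed.

Notation CV := C_R_CompleteNormedModule.

Definition ContI (h : R -> C) : Prop :=
  forall s, inI s -> forall eps, 0 < eps -> exists del, 0 < del /\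
    forall t, inI t -> Rabs (t - s) < del -> Cmod (h t - h s)%C < eps.

Lemma ContI_clamp h z : ContI h -> continuous (U := C_R_NormedModule) (fun x => h (clamp x)) z.
Proof.
  intros Hh. apply (proj2 (@filterlim_locally_ball_norm _ _ C_R_NormedModule _ _ _ _)).
  intros [eps Heps]. destruct (Hh (clamp z) (clamp_I z) eps Heps) as [d [Hd H]].
  exists (mkposreal d Hd). intros y Hy. change (Rabs (y - z) < d) in Hy.
  unfold ball_norm. rewrite <- Cmod_norm. simpl. apply H. apply clamp_I.
  pose proof (clamp_lip y z). lra.
Qed.

Lemma ex_RInt_ContI h a b : ContI h -> inI a -> inI b -> ex_RInt (V := CV) h a b.
Proof.
  intros Hh Ha Hb. apply ex_RInt_ext with (f := fun x => h (clamp x)).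
  { intros x Hx. rewrite clamp_id. auto. apply (between_I a b); auto; lra. }
  apply (ex_RInt_continuous (V := CV)). intros z _. apply (ContI_clamp h z Hh).
Qed.



Lemma is_RInt_Cmult (k : C) f a b l : is_RInt (V := C_R_NormedModule) f a b l ->
  is_RInt (V := C_R_NormedModule) (fun t => k * f t)%C a b (k * l)%C.
Proof.
  intros H. destruct k as [k1 k2]. destruct l as [l1 l2].
  assert (H1 := is_RInt_fct_extend_fst (U := R_NormedModule) (V := R_NormedModule) _ _ _ _ H).
  assert (H2 := is_RInt_fct_extend_snd (U := R_NormedModule) (V := R_NormedModule) _ _ _ _ H).
  cbn [fst snd] in H1, H2.
  replace ((k1, k2) * (l1, l2))%C with (k1 * l1 - k2 * l2, k1 * l2 + k2 * l1) by (unfold Cmult; cbn [fst snd]; f_equal; ring).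
  apply (is_RInt_fct_extend_pair (U := R_NormedModule) (V := R_NormedModule) (fun t => ((k1, k2) * f t)%C) a b (k1 * l1 - k2 * l2) (k1 * l2 + k2 * l1)).
  - apply (is_RInt_ext (V := R_NormedModule)) with (f := fun t => minus (scal k1 (fst (f t))) (scal k2 (snd (f t)))).
    { intros x _. destruct (f x) as [u v]. unfold Cmult; cbn [fst snd].
      change (k1 * u + - (k2 * v) = k1 * u - k2 * v :> R). ring. }
    pose proof (is_RInt_minus (V:=R_NormedModule) _ _ a b _ _ (is_RInt_scal _ _ _ k1 _ H1) (is_RInt_scal _ _ _ k2 _ H2)) as K.
    exact K.
  - apply (is_RInt_ext (V := R_NormedModule)) with (f := fun t => plus (scal k1 (snd (f t))) (scal k2 (fst (f t)))).
    { intros x _. destruct (f x) as [u v]. unfold Cmult; cbn [fst snd].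
      change (k1 * v + k2 * u = k1 * v + k2 * u :> R). ring. }
    pose proof (is_RInt_plus (V:=R_NormedModule) _ _ a b _ _ (is_RInt_scal _ _ _ k1 _ H2) (is_RInt_scal _ _ _ k2 _ H1)) as K.
    exact K.
Qed.

Lemma Ii_Cmult (k : C) f a b : ex_RInt (V := CV) f a b ->
  RInt (V := CV) (fun t => k * f t)%C a b = (k * RInt (V := CV) f a b)%C.
Proof.
  intros H. apply (is_RInt_unique (V := CV)). apply is_RInt_Cmult. apply (RInt_correct (V := CV)). auto.
Qed.

Lemma Ii_plus f g a b : ex_RInt (V := CV) f a b -> ex_RInt (V := CV) g a b ->
  RInt (V := CV) (fun t => f t + g t)%C a b = (RInt (V := CV) f a b + RInt (V := CV) g a b)%C.
Proof. intros Hf Hg. exact (RInt_plus (V := CV) f g a b Hf Hg). Qed.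

Lemma Ii_minus f g a b : ex_RInt (V := CV) f a b -> ex_RInt (V := CV) g a b ->
  RInt (V := CV) (fun t => f t - g t)%C a b = (RInt (V := CV) f a b - RInt (V := CV) g a b)%C.
Proof. intros Hf Hg. exact (RInt_minus (V := CV) f g a b Hf Hg). Qed.

Lemma Ii_const (c : C) a b : RInt (V := CV) (fun _ => c) a b = (RtoC (b - a) * c)%C.
Proof.
  rewrite (RInt_const (V := CV)). destruct c as [u v].
  change (((b - a) * u, (b - a) * v) = (RtoC (b - a) * (u, v))%C).
  unfold Cmult, RtoC; cbn [fst snd]. f_equal; ring.
Qed.

Lemma Ii_Chasles f a b c : ex_RInt (V := CV) f a b -> ex_RInt (V := CV) f b c ->
  (RInt (V := CV) f a b + RInt (V := CV) f b c)%C = RInt (V := CV) f a c.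
Proof. intros H1 H2. exact (RInt_Chasles (V := CV) f a b c H1 H2). Qed.

Lemma Ii_bound f a b M : ex_RInt (V := CV) f a b ->
  (forall x, Rmin a b <= x <= Rmax a b -> Cmod (f x) <= M) ->
  Cmod (RInt (V := CV) f a b) <= M * Rabs (b - a).
Proof.
  intros Hex HM. destruct (Rle_dec a b) as [Hab|Hab].
  - rewrite Rabs_right by lra. rewrite Cmod_norm.
    assert (K := norm_RInt_le_const (V := CV) f a b (RInt (V := CV) f a b) M Hab).
    rewrite Rmult_comm. apply K.
    intros x Hx. rewrite <- Cmod_norm. apply HM. rewrite Rmin_left, Rmax_right; lra.
    apply (RInt_correct (V := CV)). auto.
  - rewrite <- (opp_RInt_swap (V := CV)).
    2:{ apply (ex_RInt_swap (V := CV)). auto. }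
    rewrite Cmod_norm, (norm_opp (V := CV)). rewrite Rabs_left by lra.
    assert (K := norm_RInt_le_const (V := CV) f b a (RInt (V := CV) f b a) M ltac:(lra)).
    replace (- (b - a)) with (a - b) by ring. rewrite Rmult_comm. apply K.
    intros x Hx. rewrite <- Cmod_norm. apply HM. rewrite Rmin_right, Rmax_left; lra.
    apply (RInt_correct (V := CV)). apply (ex_RInt_swap (V := CV)). auto.
Qed.

Lemma Ii_ext (f g : R -> C) a b : (forall x, Rmin a b <= x <= Rmax a b -> f x = g x) ->
  RInt (V := CV) f a b = RInt (V := CV) g a b.
Proof. intros H. apply (RInt_ext (V := CV)). intros; apply H; lra. Qed.


Lemma Cont2_ContI_r F s : Cont2 F -> inI s -> ContI (fun t => F s t).
Proof.
  intros HF Hs t Ht eps Heps. destruct (HF s t Hs Ht eps Heps) as [d [Hd H]].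
  exists d. split; [auto|]. intros y Hy Hyt. apply H; auto. rewrite Rminus_diag, Rabs_R0; lra.
Qed.

Lemma Cont2_t (h : R -> C) : ContI h -> Cont2 (fun _ t => h t).
Proof.
  intros Hh s t Hs Ht eps Heps. destruct (Hh t Ht eps Heps) as [d [Hd H]].
  exists d. split; [auto|]. intros x y Hx Hy _ Hyt. apply H; auto.
Qed.

Lemma Cont2_const (c : C) : Cont2 (fun _ _ => c).
Proof.
  intros s t _ _ eps Heps. exists 1. split; [lra|]. intros. replace (c - c)%C with (RtoC 0) by ring.
  rewrite Cmod_0; lra.
Qed.

Lemma Cont2_plus F G : Cont2 F -> Cont2 G -> Cont2 (fun x y => F x y + G x y)%C.
Proof.
  intros HF HG s t Hs Ht eps Heps.
  destruct (HF s t Hs Ht (eps/2) ltac:(lra)) as [d1 [Hd1 H1]].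
  destruct (HG s t Hs Ht (eps/2) ltac:(lra)) as [d2 [Hd2 H2]].
  exists (Rmin d1 d2). split. apply Rmin_pos; auto. intros x y Hx Hy Hxs Hyt.
  pose proof (Rmin_l d1 d2). pose proof (Rmin_r d1 d2).
  replace (F x y + G x y - (F s t + G s t))%C with ((F x y - F s t) + (G x y - G s t))%C by ring.
  eapply Rle_lt_trans. apply Cmod_triangle.
  specialize (H1 x y Hx Hy ltac:(lra) ltac:(lra)). specialize (H2 x y Hx Hy ltac:(lra) ltac:(lra)). lra.
Qed.

Lemma Cont2_minus F G : Cont2 F -> Cont2 G -> Cont2 (fun x y => F x y - G x y)%C.
Proof.
  intros HF HG s t Hs Ht eps Heps.
  destruct (HF s t Hs Ht (eps/2) ltac:(lra)) as [d1 [Hd1 H1]].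
  destruct (HG s t Hs Ht (eps/2) ltac:(lra)) as [d2 [Hd2 H2]].
  exists (Rmin d1 d2). split. apply Rmin_pos; auto. intros x y Hx Hy Hxs Hyt.
  pose proof (Rmin_l d1 d2). pose proof (Rmin_r d1 d2).
  replace (F x y - G x y - (F s t - G s t))%C with ((F x y - F s t) - (G x y - G s t))%C by ring.
  eapply Rle_lt_trans. apply Cmod_minus_le.
  specialize (H1 x y Hx Hy ltac:(lra) ltac:(lra)). specialize (H2 x y Hx Hy ltac:(lra) ltac:(lra)). lra.
Qed.

Lemma Cont2_mult F G : Cont2 F -> Cont2 G -> Cont2 (fun x y => F x y * G x y)%C.
Proof.
  intros HF HG s t Hs Ht eps Heps.
  pose proof (Cmod_ge_0 (F s t)) as PF. pose proof (Cmod_ge_0 (G s t)) as PG.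
  destruct (HF s t Hs Ht (eps / 2 / (Cmod (G s t) + 1)) ltac:(apply Rdiv_lt_0_compat; lra)) as [d1 [Hd1 H1]].
  destruct (HG s t Hs Ht (Rmin 1 (eps / 2 / (Cmod (F s t) + 1))) ltac:(apply Rmin_pos; [lra|apply Rdiv_lt_0_compat; lra]))
     as [d2 [Hd2 H2]].
  exists (Rmin d1 d2). split. apply Rmin_pos; auto. intros x y Hx Hy Hxs Hyt.
  pose proof (Rmin_l d1 d2). pose proof (Rmin_r d1 d2).
  specialize (H1 x y Hx Hy ltac:(lra) ltac:(lra)). specialize (H2 x y Hx Hy ltac:(lra) ltac:(lra)).
  pose proof (Rmin_l 1 (eps / 2 / (Cmod (F s t) + 1))). pose proof (Rmin_r 1 (eps / 2 / (Cmod (F s t) + 1))).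
  replace (F x y * G x y - F s t * G s t)%C with ((F x y - F s t) * G x y + F s t * (G x y - G s t))%C by ring.
  eapply Rle_lt_trans. apply Cmod_triangle. rewrite !Cmod_mult.
  assert (HGb : Cmod (G x y) <= Cmod (G s t) + 1).
  { replace (G x y) with ((G x y - G s t) + G s t)%C by ring. eapply Rle_trans. apply Cmod_triangle. lra. }
  assert (E1 : Cmod (F x y - F s t)%C * Cmod (G x y) < eps / 2).
  { apply Rle_lt_trans with (Cmod (F x y - F s t)%C * (Cmod (G s t) + 1)).
    apply Rmult_le_compat_l; auto using Cmod_ge_0.
    apply Rmult_lt_reg_r with (/ (Cmod (G s t) + 1)). apply Rinv_0_lt_compat; lra.
    rewrite Rmult_assoc, Rinv_r by lra. lra. }
  assert (E2 : Cmod (F s t) * Cmod (G x y - G s t)%C <= eps / 2).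
  { apply Rle_trans with (Cmod (F s t) * (eps / 2 / (Cmod (F s t) + 1))).
    apply Rmult_le_compat_l; auto. lra. apply frac_le; lra. }
  lra.
Qed.

Lemma Cont2_scal (k : C) F : Cont2 F -> Cont2 (fun x y => k * F x y)%C.
Proof. intros H. apply (Cont2_mult (fun _ _ => k)). apply Cont2_const. auto. Qed.

Lemma cos_lip x y : Rabs (cos x - cos y) <= Rabs (x - y).
Proof.
  destruct (MVT_gen cos y x (fun z => - sin z)) as [c [_ E]].
  - intros; auto_derive; auto; ring.
  - intros; apply continuity_cos.
  - rewrite E, Rabs_mult, Rabs_Ropp. pose proof (Rabs_pos (x - y)).
    assert (Rabs (sin c) <= 1) by (apply Rabs_le; apply SIN_bound). nra.
Qed.

Lemma sin_lip x y : Rabs (sin x - sin y) <= Rabs (x - y).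
Proof.
  destruct (MVT_gen sin y x cos) as [c [_ E]].
  - intros; auto_derive; auto; ring.
  - intros; apply continuity_sin.
  - rewrite E, Rabs_mult. pose proof (Rabs_pos (x - y)).
    assert (Rabs (cos c) <= 1) by (apply Rabs_le; apply COS_bound). nra.
Qed.

Lemma cis_lip x y : Cmod (cis x - cis y)%C <= 2 * Rabs (x - y).
Proof.
  eapply Rle_trans. apply Cmod_le_sum. unfold cis. cbn [fst snd Cminus Cplus Copp].
  pose proof (cos_lip x y). pose proof (sin_lip x y).
  replace (cos x + - cos y) with (cos x - cos y) by ring. replace (sin x + - sin y) with (sin x - sin y) by ring. lra.
Qed.

Lemma Cmod_cis x : Cmod (cis x) = 1.
Proof. unfold cis, Cmod. cbn [fst snd]. rewrite <- sqrt_1. f_equal. rewrite <- (sin2_cos2 x). unfold Rsqr. ring. Qed.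

Lemma Cont2_cis (phi : R -> R -> R) K : 0 <= K ->
  (forall x y s t, Rabs (phi x y - phi s t) <= K * (Rabs (x - s) + Rabs (y - t))) ->
  Cont2 (fun x y => cis (phi x y)).
Proof.
  intros HK Hphi s t _ _ eps Heps. exists (eps / (4 * K + 1)). split. apply Rdiv_lt_0_compat; lra.
  intros x y _ _ Hx Hy. eapply Rle_lt_trans. apply cis_lip.
  specialize (Hphi x y s t).
  assert (K * (Rabs (x - s) + Rabs (y - t)) <= K * (2 * (eps / (4 * K + 1)))) by (apply Rmult_le_compat_l; lra).
  assert (K * (2 * (eps / (4 * K + 1))) * 2 < eps).
  { replace (K * (2 * (eps / (4 * K + 1))) * 2) with (eps * (4 * K / (4 * K + 1))) by (field; lra).
    assert (4 * K / (4 * K + 1) < 1). { apply Rmult_lt_reg_r with (4 * K + 1). lra. unfold Rdiv. rewrite Rmult_assoc, Rinv_l by lra. lra. }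
    nra. }
  lra.
Qed.

Lemma ContI_of_Dr f f' : (forall s, inI s -> Dr f s (f' s)) -> ContI f.
Proof. intros H s Hs. apply (Dr_cont f s (f' s)). auto. Qed.

Lemma ContI_plus f g : ContI f -> ContI g -> ContI (fun x => f x + g x)%C.
Proof.
  intros Hf Hg. intros s Hs. apply (Cont2_ContI_r (fun _ x => f x + g x)%C s).
  apply Cont2_plus; apply Cont2_t; auto. auto. auto.
Qed.

Lemma ContI_minus f g : ContI f -> ContI g -> ContI (fun x => f x - g x)%C.
Proof.
  intros Hf Hg. intros s Hs. apply (Cont2_ContI_r (fun _ x => f x - g x)%C s).
  apply Cont2_minus; apply Cont2_t; auto. auto. auto.
Qed.

Lemma ContI_mult f g : ContI f -> ContI g -> ContI (fun x => f x * g x)%C.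
Proof.
  intros Hf Hg. intros s Hs. apply (Cont2_ContI_r (fun _ x => f x * g x)%C s).
  apply Cont2_mult; apply Cont2_t; auto. auto. auto.
Qed.

Lemma ContI_const (c : C) : ContI (fun _ => c).
Proof. intros s Hs. apply (Cont2_ContI_r (fun _ _ => c) s). apply Cont2_const. auto. auto. Qed.

Lemma ContI_scal (k : C) f : ContI f -> ContI (fun x => k * f x)%C.
Proof. intros; apply (ContI_mult (fun _ => k)). apply ContI_const. auto. Qed.

Lemma Dr_lin (c : C) s : Dr (fun x => RtoC x * c)%C s c.
Proof.
  intros eps Heps. exists 1. split; [lra|]. intros t _ _. cbv beta.
  replace (RtoC t * c - RtoC s * c - RtoC (t - s) * c)%C with (RtoC 0) by (rewrite RtoC_minus; ring).
  rewrite Cmod_0. pose proof (Rabs_pos (t - s)). nra.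
Qed.

Lemma LeibF H K a b s : Cont2 H -> Cont2 K ->
  (forall x t, inI x -> inI t -> Dr (fun y => H y t) x (K x t)) -> inI a -> inI b -> inI s ->
  Dr (fun x => RInt (V := CV) (H x) a b) s (RInt (V := CV) (K s) a b).
Proof.
  intros HH HK HD Ha Hb Hs eps Heps.
  destruct (tube K s HK Hs (eps/8) ltac:(lra)) as [d [Hd T]].
  exists d. split; [auto|]. intros s' Hs' Hss'.
  assert (C1 := Cont2_ContI_r H s' HH Hs'). assert (C2 := Cont2_ContI_r H s HH Hs).
  assert (C3 := Cont2_ContI_r K s HK Hs).
  rewrite <- Ii_Cmult by (apply ex_RInt_ContI; auto).
  rewrite <- Ii_minus by (apply ex_RInt_ContI; auto).
  rewrite <- Ii_minus by (apply ex_RInt_ContI; auto using ContI_minus, ContI_scal).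
  apply Rle_trans with (eps / 4 * Rabs (s' - s) * Rabs (b - a)).
  2:{ assert (Rabs (b - a) <= 2) by (unfold inI in *; unfold Rabs; destruct Rcase_abs; lra).
      pose proof (Rabs_pos (s' - s)). apply Rle_trans with (eps / 4 * Rabs (s' - s) * 2). apply Rmult_le_compat_l; [nra|auto]. nra. }
  apply Ii_bound. { apply ex_RInt_ContI; auto using ContI_minus, ContI_scal. }
  intros t Ht. assert (HtI : inI t) by (apply (between_I a b); auto).
  set (phi := fun x => (H x t - RtoC x * K s t)%C).
  assert (Hm := MVI phi (fun x => K x t - K s t)%C s s' (eps / 8) Hs Hs').
  replace (H s' t - H s t - RtoC (s' - s) * K s t)%C with (phi s' - phi s)%C
    by (unfold phi; rewrite RtoC_minus; ring).
  eapply Rle_trans. apply Hm.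
  - intros x Hx. unfold phi. apply Dr_minus. apply HD; auto. apply (between_I s s'); auto. apply Dr_lin.
  - intros x Hx. assert (HxI : inI x) by (apply (between_I s s'); auto).
    apply Rlt_le. apply T; auto.
    apply Rle_lt_trans with (Rabs (s' - s)); auto.
    unfold Rmin, Rmax in Hx; destruct Rle_dec in Hx; unfold Rabs; repeat destruct Rcase_abs; lra.
  - lra.
Qed.

Lemma LeibV H K a s : Cont2 H -> Cont2 K ->
  (forall x t, inI x -> inI t -> Dr (fun y => H y t) x (K x t)) -> inI a -> inI s ->
  Dr (fun x => RInt (V := CV) (H x) a x) s (H s s + RInt (V := CV) (K s) a s)%C.
Proof.
  intros HH HK HD Ha Hs eps Heps.
  destruct (LeibF H K a s s HH HK HD Ha Hs Hs (eps/2) ltac:(lra)) as [d1 [Hd1 L1]].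
  destruct (HH s s Hs Hs (eps/2) ltac:(lra)) as [d2 [Hd2 L2]].
  exists (Rmin d1 d2). split. apply Rmin_pos; auto. intros s' Hs' Hss'.
  pose proof (Rmin_l d1 d2). pose proof (Rmin_r d1 d2).
  specialize (L1 s' Hs' ltac:(lra)).
  assert (C1 := Cont2_ContI_r H s' HH Hs').
  rewrite <- (Ii_Chasles (H s') a s s') by (apply ex_RInt_ContI; auto).
  set (X := (RInt (V := CV) (H s') a s - RInt (V := CV) (H s) a s - RtoC (s' - s) * RInt (V := CV) (K s) a s)%C) in *.
  replace (RInt (V := CV) (H s') a s + RInt (V := CV) (H s') s s' - RInt (V := CV) (H s) a s -
      RtoC (s' - s) * (H s s + RInt (V := CV) (K s) a s))%C
    with (X + (RInt (V := CV) (H s') s s' - RtoC (s' - s) * H s s))%C by (unfold X; ring).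
  rewrite <- Ii_const, <- Ii_minus by (auto using ex_RInt_ContI, ContI_const).
  eapply Rle_trans. apply Cmod_triangle.
  assert (Cmod (RInt (V := CV) (fun t => H s' t - H s s)%C s s') <= eps / 2 * Rabs (s' - s)).
  { apply Ii_bound. apply ex_RInt_ContI; auto using ContI_minus, ContI_const.
    intros t Ht. assert (HtI : inI t) by (apply (between_I s s'); auto).
    apply Rlt_le. apply L2; auto. lra.
    apply Rle_lt_trans with (Rabs (s' - s)). 2: lra.
    unfold Rmin, Rmax in Ht; destruct Rle_dec in Ht; unfold Rabs; repeat destruct Rcase_abs; lra. }
  lra.
Qed.

Lemma FTC1 h a s : ContI h -> inI a -> inI s -> Dr (fun x => RInt (V := CV) h a x) s (h s).
Proof.
  intros Hh Ha Hs.
  assert (D := LeibV (fun _ t => h t) (fun _ _ => RtoC 0) a s (Cont2_t h Hh) (Cont2_const _)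
     ltac:(intros; apply Dr_const) Ha Hs).
  cbv beta in D. rewrite Ii_const in D. replace (h s + RtoC (s - a) * RtoC 0)%C with (h s) in D by ring. exact D.
Qed.


Lemma Dr_val f s l l' : Dr f s l -> l = l' -> Dr f s l'.
Proof. intros H E; subst; auto. Qed.

Lemma IDq n L Lp a : Cn_I2 n L Lp -> inI a -> forall p q, (p <= n)%nat -> (q < n)%nat ->
  forall s t, inI s -> inI t -> Lp p q s t = (Lp p q s a + RInt (V := CV) (Lp p (S q) s) a t)%C.
Proof.
  intros [H0 [Ht [Hs Hc]]] Ha. induction p as [|p IH]; intros q Hp Hq.
  - intros s t Hs0 Ht0.
    assert (E : forall x, inI x -> (Lp 0%nat q s x - RInt (V := CV) (Lp 0%nat (S q) s) a x)%C =
                  (Lp 0%nat q s a - RInt (V := CV) (Lp 0%nat (S q) s) a a)%C).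
    { intros x Hx. apply (Dr_zero_const (fun x => Lp 0%nat q s x - RInt (V := CV) (Lp 0%nat (S q) s) a x)%C x a); auto.
      intros y Hy. eapply Dr_val. apply Dr_minus. apply is_derive_I_Dr. apply Ht; auto.
      apply FTC1; auto. apply Cont2_ContI_r; auto. apply continuous_I2_Cont2. apply Hc; lia. ring. }
    specialize (E t Ht0). replace (RInt (V := CV) (Lp 0%nat (S q) s) a a) with (RtoC 0) in E by (rewrite (RInt_point (V := CV)); reflexivity).
    replace (Lp 0%nat q s t) with ((Lp 0%nat q s t - RInt (V := CV) (Lp 0%nat (S q) s) a t) + RInt (V := CV) (Lp 0%nat (S q) s) a t)%C by ring.
    rewrite E. ring.
  - intros s t Hs0 Ht0.
    assert (Hu : Dr (fun x => Lp p q x t) s (Lp (S p) q s t)) by (apply is_derive_I_Dr; apply Hs; auto; lia).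
    assert (Hv : Dr (fun x => Lp p q x a + RInt (V := CV) (Lp p (S q) x) a t)%C s
                    (Lp (S p) q s a + RInt (V := CV) (Lp (S p) (S q) s) a t)%C).
    { apply Dr_plus. apply is_derive_I_Dr; apply Hs; auto; lia.
      apply LeibF; auto. apply continuous_I2_Cont2; apply Hc; lia. apply continuous_I2_Cont2; apply Hc; lia.
      intros x y Hx Hy. apply is_derive_I_Dr. apply Hs; auto; lia. }
    apply (Dr_unique (fun x => Lp p q x t) s); auto.
    apply (Dr_ext (fun x => Lp p q x a + RInt (V := CV) (Lp p (S q) x) a t)%C); auto.
    intros x Hx. symmetry. apply IH; auto. lia.
Qed.

Lemma Dr_diag n L Lp a p q s : Cn_I2 n L Lp -> inI a -> (p < n)%nat -> (q < n)%nat -> inI s ->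
  Dr (fun x => Lp p q x x) s (Lp (S p) q s s + Lp p (S q) s s)%C.
Proof.
  intros HC Ha Hp Hq Hs0. pose proof HC as [H0 [Ht [Hs Hc]]].
  apply (Dr_ext (fun x => Lp p q x a + RInt (V := CV) (Lp p (S q) x) a x)%C); auto.
  { intros x Hx. symmetry. apply (IDq n L Lp a HC Ha); auto; lia. }
  eapply Dr_val. apply Dr_plus. apply is_derive_I_Dr; apply Hs; auto; lia.
  apply (LeibV (Lp p (S q)) (Lp (S p) (S q))); auto. apply continuous_I2_Cont2; apply Hc; lia. apply continuous_I2_Cont2; apply Hc; lia.
  intros x y Hx Hy. apply is_derive_I_Dr. apply Hs; auto; lia.
  rewrite (IDq n L Lp a HC Ha (S p) q ltac:(lia) Hq s s Hs0 Hs0). ring.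
Qed.

Lemma cis_0 : cis 0 = RtoC 1.
Proof. unfold cis, RtoC. rewrite cos_0, sin_0. reflexivity. Qed.

Lemma Dr_J n L Lp a kappa p s : Cn_I2 n L Lp -> inI a -> (p < n)%nat -> inI s ->
  Dr (fun x => RInt (V := CV) (fun t => Lp p n x t * cis (kappa * (t - x)))%C a x) s
     (Lp p n s s + RInt (V := CV) (fun t => Lp (S p) n s t * cis (kappa * (t - s)))%C a s
      + (0, (- kappa)%R) * RInt (V := CV) (fun t => Lp p n s t * cis (kappa * (t - s)))%C a s)%C.
Proof.
  intros HC Ha Hp Hs0. pose proof HC as [H0 [Ht [Hs Hc]]].
  assert (Ccis : Cont2 (fun x t => cis (kappa * (t - x)))).
  { apply (Cont2_cis _ (Rabs kappa)). apply Rabs_pos. intros x y s' t'.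
    replace (kappa * (y - x) - kappa * (t' - s')) with (kappa * ((y - t') - (x - s'))) by ring.
    rewrite Rabs_mult. apply Rmult_le_compat_l. apply Rabs_pos.
    eapply Rle_trans. apply Rabs_triang. rewrite Rabs_Ropp. lra. }
  assert (CL : forall p', (p' <= n)%nat -> Cont2 (Lp p' n)) by (intros; apply continuous_I2_Cont2; apply Hc; lia).
  eapply Dr_val. apply (LeibV (fun x t => Lp p n x t * cis (kappa * (t - x)))%C
     (fun x t => Lp (S p) n x t * cis (kappa * (t - x)) + Lp p n x t * ((0, (- kappa)%R) * cis (kappa * (t - x))))%C); auto.
  - apply Cont2_mult; auto. apply CL; lia.
  - apply Cont2_plus; apply Cont2_mult; auto using Cont2_scal. apply CL; lia.
  - intros x t Hx Htt.
    assert (Dc : Dr (fun y => cis (kappa * (t - y))) x ((0, (- kappa)%R) * cis (kappa * (t - x)))%C).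
    { replace (fun y => cis (kappa * (t - y))) with (fun y => cis (- kappa * y + kappa * t))
        by (apply functional_extensionality; intro y; f_equal; ring).
      replace (kappa * (t - x)) with (- kappa * x + kappa * t) by ring. apply Dr_cis. }
    eapply Dr_val. apply Dr_mult. apply is_derive_I_Dr; apply Hs; auto; lia. exact Dc. reflexivity.
  - cbv beta. rewrite Rminus_diag, Rmult_0_r, cis_0.
    assert (CI : forall p', (p' <= n)%nat -> ContI (fun t => Lp p' n s t * cis (kappa * (t - s)))%C).
    { intros p' Hp'. apply (Cont2_ContI_r (fun x t => Lp p' n x t * cis (kappa * (t - x)))%C); auto.
      apply Cont2_mult; auto. }
    rewrite Ii_plus. rewrite <- Ii_Cmult. 
    rewrite (Ii_ext (fun t => Lp p n s t * ((0, (- kappa)%R) * cis (kappa * (t - s))))%C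
                    (fun t => (0, (- kappa)%R) * (Lp p n s t * cis (kappa * (t - s))))%C) by (intros; ring).
    ring.
    all: apply ex_RInt_ContI; auto.
    all: try (apply CI; lia).
    all: try (apply ContI_scal; apply CI; lia).
    all: apply ContI_mult; [apply Cont2_ContI_r; auto; apply CL; lia |
        apply ContI_scal; apply (Cont2_ContI_r (fun x t => cis (kappa * (t - x)))); auto].
Qed.


Lemma Cpowz_succ (c : C) (k : Z) : c <> RtoC 0 -> Cpowz c (k + 1) = (c * Cpowz c k)%C.
Proof.
  intros Hc. unfold Cpowz.
  destruct (Z.leb_spec 0 (k + 1)) as [H1|H1]; destruct (Z.leb_spec 0 k) as [H2|H2].
  - replace (Z.to_nat (k + 1)) with (S (Z.to_nat k)) by lia. apply Cpow_S.
  - assert (k = -1)%Z by lia. subst. simpl. field. auto.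
  - lia.
  - replace (Z.to_nat (- k)) with (S (Z.to_nat (- (k + 1)))) by lia. rewrite Cpow_S.
    field. split; auto. apply Cpow_nz; auto.
Qed.

Lemma Cpowz_eq (c : C) (k1 k2 : Z) : k1 = k2 -> Cpowz c k1 = Cpowz c k2.
Proof. intros; subst; auto. Qed.

Definition cb (l p : nat) : R := if (p <=? l)%nat then Binomial.C l p else 0.

Lemma cb_pascal l p : cb (S l) (S p) = cb l p + cb l (S p).
Proof.
  unfold cb. destruct (Nat.leb_spec (S p) (S l)); destruct (Nat.leb_spec p l); destruct (Nat.leb_spec (S p) l); try lia.
  - rewrite <- pascal by lia. ring.
  - assert (p = l) by lia. subst. rewrite !C_n_n. ring.
  - ring.
Qed.

Lemma cb_0 l : cb l 0 = 1.
Proof. unfold cb. simpl. apply C_n_0. Qed.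

Lemma cb_big l p : (l < p)%nat -> cb l p = 0.
Proof. intros. unfold cb. destruct (Nat.leb_spec p l); auto; lia. Qed.

Lemma cb_le l p : (p <= l)%nat -> cb l p = Binomial.C l p.
Proof. intros. unfold cb. destruct (Nat.leb_spec p l); auto; lia. Qed.

Lemma csum_extend m M f g : (m <= M)%nat -> (forall k, (k < m)%nat -> f k = g k) ->
  (forall k, (m <= k < M)%nat -> g k = RtoC 0) -> csum m f = csum M g.
Proof.
  intros HmM Hfg Hg. induction M.
  - assert (m = 0%nat) by lia. subst. reflexivity.
  - destruct (Nat.eq_dec m (S M)).
    + subst. apply csum_ext. auto.
    + rewrite csum_Sr. rewrite <- IHM; [| lia | intros; apply Hg; lia]. rewrite Hg by lia. ring.
Qed.

Lemma Ypart (c : C) n l (Y : nat -> C) : c <> RtoC 0 ->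
  csum (S l) (fun p => RtoC (Binomial.C l p) * Cpowz c (Z.of_nat l - Z.of_nat p - Z.of_nat n) * (Y (S p) + c * Y p))%C
  = csum (S (S l)) (fun p => RtoC (Binomial.C (S l) p) * Cpowz c (Z.of_nat (S l) - Z.of_nat p - Z.of_nat n) * Y p)%C.
Proof.
  intros Hc.
  rewrite (csum_extend (S l) (S (S l)) _
     (fun p => RtoC (cb l p) * Cpowz c (Z.of_nat l - Z.of_nat p - Z.of_nat n) * Y (S p)
              + RtoC (cb l p) * Cpowz c (Z.of_nat l - Z.of_nat p - Z.of_nat n) * c * Y p)%C).
  2: lia.
  2:{ intros k Hk. rewrite cb_le by lia. ring. }
  2:{ intros k Hk. rewrite cb_big by lia. ring. }
  rewrite (csum_ext (S (S l)) (fun p => RtoC (Binomial.C (S l) p) * Cpowz c (Z.of_nat (S l) - Z.of_nat p - Z.of_nat n) * Y p)%C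
     (fun p => RtoC (cb (S l) p) * Cpowz c (Z.of_nat (S l) - Z.of_nat p - Z.of_nat n) * Y p)%C).
  2:{ intros k Hk. rewrite cb_le by lia. reflexivity. }
  rewrite csum_plus.
  rewrite (csum_Sr (S l) (fun p => RtoC (cb l p) * Cpowz c (Z.of_nat l - Z.of_nat p - Z.of_nat n) * Y (S p))%C).
  rewrite (csum_Sl (S l) (fun p => RtoC (cb l p) * Cpowz c (Z.of_nat l - Z.of_nat p - Z.of_nat n) * c * Y p)%C).
  rewrite (csum_Sl (S l) (fun p => RtoC (cb (S l) p) * Cpowz c (Z.of_nat (S l) - Z.of_nat p - Z.of_nat n) * Y p)%C). rewrite cb_big by lia. rewrite !cb_0.
  rewrite (csum_ext (S l) (fun k => RtoC (cb (S l) (S k)) * Cpowz c (Z.of_nat (S l) - Z.of_nat (S k) - Z.of_nat n) * Y (S k))%C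
     (fun k => RtoC (cb l k) * Cpowz c (Z.of_nat l - Z.of_nat k - Z.of_nat n) * Y (S k)
        + RtoC (cb l (S k)) * Cpowz c (Z.of_nat l - Z.of_nat (S k) - Z.of_nat n) * c * Y (S k))%C).
  2:{ intros k Hk. rewrite cb_pascal, RtoC_plus.
      rewrite (Cpowz_eq c (Z.of_nat (S l) - Z.of_nat (S k) - Z.of_nat n) (Z.of_nat l - Z.of_nat k - Z.of_nat n)) by lia.
      rewrite (Cpowz_eq c (Z.of_nat l - Z.of_nat k - Z.of_nat n) ((Z.of_nat l - Z.of_nat (S k) - Z.of_nat n) + 1)) by lia.
      rewrite Cpowz_succ by auto. ring. }
  rewrite csum_plus.
  rewrite (Cpowz_eq c (Z.of_nat (S l) - Z.of_nat 0 - Z.of_nat n) ((Z.of_nat l - Z.of_nat 0 - Z.of_nat n) + 1)) by lia.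
  rewrite Cpowz_succ by auto. ring.
Qed.

Definition aco (c : C) (l p q : nat) : C :=
  if (l <=? q + p)%nat then (RtoC (cb l p) * Cpowz c (Z.of_nat l - 1 - Z.of_nat p - Z.of_nat q))%C else RtoC 0.
Definition aco1 (c : C) (l p q : nat) : C := match p with O => RtoC 0 | S p' => aco c l p' q end.
Definition aco2 (c : C) (l p q : nat) : C := match q with O => RtoC 0 | S q' => aco c l p q' end.

Lemma aco_pascal c l p q : (aco1 c l p q + aco2 c l p q)%C = aco c (S l) p q.
Proof.
  unfold aco1, aco2, aco. destruct p as [|p']; destruct q as [|q'].
  - destruct (Nat.leb_spec (S l) (0 + 0)); [lia| ring].
  - destruct (Nat.leb_spec l (q' + 0)); destruct (Nat.leb_spec (S l) (S q' + 0)); try lia; rewrite ?cb_0.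
    + rewrite (Cpowz_eq c (Z.of_nat l - 1 - Z.of_nat 0 - Z.of_nat q') (Z.of_nat (S l) - 1 - Z.of_nat 0 - Z.of_nat (S q'))) by lia. ring.
    + ring.
  - destruct (Nat.leb_spec l (0 + p')); destruct (Nat.leb_spec (S l) (0 + S p')); try lia.
    + rewrite cb_pascal, (cb_big l (S p')) by lia.
      rewrite (Cpowz_eq c (Z.of_nat l - 1 - Z.of_nat p' - Z.of_nat 0) (Z.of_nat (S l) - 1 - Z.of_nat (S p') - Z.of_nat 0)) by lia.
      rewrite RtoC_plus. ring.
    + ring.
  - destruct (Nat.leb_spec l (S q' + p')); destruct (Nat.leb_spec l (q' + S p')); destruct (Nat.leb_spec (S l) (S q' + S p')); try lia.
    + rewrite cb_pascal, RtoC_plus.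
      rewrite (Cpowz_eq c (Z.of_nat l - 1 - Z.of_nat p' - Z.of_nat (S q')) (Z.of_nat (S l) - 1 - Z.of_nat (S p') - Z.of_nat (S q'))) by lia.
      rewrite (Cpowz_eq c (Z.of_nat l - 1 - Z.of_nat (S p') - Z.of_nat q') (Z.of_nat (S l) - 1 - Z.of_nat (S p') - Z.of_nat (S q'))) by lia.
      ring.
    + ring.
Qed.

Lemma csum_ext2 n m f g : (forall q p, (q < n)%nat -> (p < m)%nat -> f q p = g q p) ->
  csum n (fun q => csum m (f q)) = csum n (fun q => csum m (g q)).
Proof. intros H. apply csum_ext. intros q Hq. apply csum_ext. intros; auto. Qed.

Lemma Xpart (c : C) n l (X : nat -> nat -> C) : c <> RtoC 0 -> (l < n)%nat ->
  csum n (fun q => csum (S l) (fun p => if (l <=? q + p)%nat then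
      (RtoC (Binomial.C l p) * Cpowz c (Z.of_nat l - 1 - Z.of_nat p - Z.of_nat q) * (X (S p) q + X p (S q)))%C
      else RtoC 0))
  = (csum n (fun q => csum (S (S l)) (fun p => if (S l <=? q + p)%nat then
      (RtoC (Binomial.C (S l) p) * Cpowz c (Z.of_nat (S l) - 1 - Z.of_nat p - Z.of_nat q) * X p q)%C
      else RtoC 0))
    + csum (S l) (fun p => RtoC (Binomial.C l p) * Cpowz c (Z.of_nat l - Z.of_nat p - Z.of_nat n) * X p n))%C.
Proof.
  intros Hc Hln. set (N := S (S l)).
  assert (S1 : csum n (fun q => csum (S l) (fun p => if (l <=? q + p)%nat then
      (RtoC (Binomial.C l p) * Cpowz c (Z.of_nat l - 1 - Z.of_nat p - Z.of_nat q) * (X (S p) q + X p (S q)))%C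
      else RtoC 0)) =
     (csum n (fun q => csum N (fun p => aco c l p q * X (S p) q)%C) + csum n (fun q => csum N (fun p => aco c l p q * X p (S q))%C))%C).
  { rewrite <- csum_plus. apply csum_ext. intros q Hq. rewrite <- csum_plus.
    apply csum_extend. unfold N; lia.
    - intros k Hk. unfold aco. rewrite cb_le by lia. destruct (l <=? q + k)%nat; ring.
    - intros k Hk. unfold aco. rewrite cb_big by lia. destruct (l <=? q + k)%nat; ring. }
  assert (P1 : csum n (fun q => csum N (fun p => aco c l p q * X (S p) q)%C) = csum n (fun q => csum N (fun p => aco1 c l p q * X p q)%C)).
  { apply csum_ext. intros q Hq. unfold N.
    rewrite (csum_Sr (S l) (fun p => aco c l p q * X (S p) q)%C), (csum_Sl (S l) (fun p => aco1 c l p q * X p q)%C).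
    cbn [aco1]. replace (aco c l (S l) q) with (RtoC 0) by (unfold aco; rewrite cb_big by lia; destruct (l <=? q + S l)%nat; ring).
    ring. }
  assert (P2 : csum n (fun q => csum N (fun p => aco c l p q * X p (S q))%C) =
     (csum n (fun q => csum N (fun p => aco2 c l p q * X p q)%C) + csum N (fun p => aco2 c l p n * X p n)%C)%C).
  { rewrite <- (csum_Sr n (fun q => csum N (fun p => aco2 c l p q * X p q)%C)). rewrite csum_Sl. cbn [aco2].
    rewrite (csum_ext N (fun p => RtoC 0 * X p 0%nat)%C (fun _ => RtoC 0)) by (intros; ring).
    rewrite csum_zero. ring. }
  assert (B : csum N (fun p => aco2 c l p n * X p n)%C =
     csum (S l) (fun p => RtoC (Binomial.C l p) * Cpowz c (Z.of_nat l - Z.of_nat p - Z.of_nat n) * X p n)%C).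
  { destruct n as [|n']. lia. symmetry. apply csum_extend. unfold N; lia.
    - intros k Hk. cbn [aco2]. unfold aco. destruct (Nat.leb_spec l (n' + k)); [|lia].
      rewrite cb_le by lia.
      rewrite (Cpowz_eq c (Z.of_nat l - Z.of_nat k - Z.of_nat (S n')) (Z.of_nat l - 1 - Z.of_nat k - Z.of_nat n')) by lia. ring.
    - intros k Hk. cbn [aco2]. unfold aco. rewrite cb_big by lia. destruct (l <=? n' + k)%nat; ring. }
  assert (A : csum n (fun q => csum N (fun p => if (S l <=? q + p)%nat then
      (RtoC (Binomial.C (S l) p) * Cpowz c (Z.of_nat (S l) - 1 - Z.of_nat p - Z.of_nat q) * X p q)%C
      else RtoC 0)) =
     (csum n (fun q => csum N (fun p => aco1 c l p q * X p q)%C) + csum n (fun q => csum N (fun p => aco2 c l p q * X p q)%C))%C).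
  { rewrite <- csum_plus. apply csum_ext. intros q Hq. rewrite <- csum_plus. apply csum_ext. intros p Hp.
    replace (aco1 c l p q * X p q + aco2 c l p q * X p q)%C with ((aco1 c l p q + aco2 c l p q) * X p q)%C by ring.
    rewrite aco_pascal. unfold aco. rewrite cb_le by (unfold N in Hp; lia). destruct (S l <=? q + p)%nat; ring. }
  rewrite S1, P1, P2, A, <- B. ring.
Qed.


Lemma Dr_opp f s a : Dr f s a -> Dr (fun x => - f x)%C s (- a)%C.
Proof.
  intros H eps Heps. destruct (H eps Heps) as [d [Hd K]]. exists d. split; [auto|]. intros t Ht Hts.
  replace (- f t - - f s - RtoC (t - s) * - a)%C with (- (f t - f s - RtoC (t - s) * a))%C by ring.
  rewrite Cmod_opp. auto.
Qed.

Lemma Dr_csum' m (F : R -> nat -> C) F' s : (forall j, (j < m)%nat -> Dr (fun x => F x j) s (F' j)) ->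
  Dr (fun x => csum m (F x)) s (csum m F').
Proof. intros H. apply (Dr_csum m (fun j x => F x j) F' s). auto. Qed.

Lemma GStep (c : C) n l (X : nat -> nat -> C) (Y : nat -> C) : c <> RtoC 0 -> (l < n)%nat ->
  Cplus (Copp (csum n (fun q => csum (S l) (fun p =>
     if (l <=? q + p)%nat then Cmult (Cmult (RtoC (Binomial.C l p)) (Cpowz c (Z.of_nat l - 1 - Z.of_nat p - Z.of_nat q)))
          (X (S p) q + X p (S q))%C else RtoC 0))))
   (csum (S l) (fun p => Cmult (Cmult (RtoC (Binomial.C l p)) (Cpowz c (Z.of_nat l - Z.of_nat p - Z.of_nat n)))
          (X p n + Y (S p) + c * Y p)%C))
  = Cplus (Copp (csum n (fun q => csum (S (S l)) (fun p =>
     if (S l <=? q + p)%nat then Cmult (Cmult (RtoC (Binomial.C (S l) p)) (Cpowz c (Z.of_nat (S l) - 1 - Z.of_nat p - Z.of_nat q)))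
          (X p q) else RtoC 0))))
   (csum (S (S l)) (fun p => Cmult (Cmult (RtoC (Binomial.C (S l) p)) (Cpowz c (Z.of_nat (S l) - Z.of_nat p - Z.of_nat n)))
          (Y p))).
Proof.
  intros Hc Hl.
  assert (HX := Xpart c n l X Hc Hl). assert (HY := Ypart c n l Y Hc).
  rewrite HX, <- HY.
  rewrite (csum_ext (S l) (fun p => Cmult (Cmult (RtoC (Binomial.C l p)) (Cpowz c (Z.of_nat l - Z.of_nat p - Z.of_nat n)))
          (X p n + Y (S p) + c * Y p)%C)
    (fun p => RtoC (Binomial.C l p) * Cpowz c (Z.of_nat l - Z.of_nat p - Z.of_nat n) * X p n
       + RtoC (Binomial.C l p) * Cpowz c (Z.of_nat l - Z.of_nat p - Z.of_nat n) * (Y (S p) + c * Y p))%C) by (intros; ring).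
  rewrite csum_plus. ring.
Qed.

Lemma Dr_G n L Lp a kappa j s : Cn_I2 n L Lp -> inI a -> (j < n)%nat -> inI s ->
  Dr (fun x => Cplus (Copp (csum n (fun q => csum (S j) (fun p =>
     if (j <=? q + p)%nat then Cmult (Cmult (RtoC (Binomial.C j p)) (Cpowz (0, - kappa) (Z.of_nat j - 1 - Z.of_nat p - Z.of_nat q)))
          (Lp p q x x) else RtoC 0))))
   (csum (S j) (fun p => Cmult (Cmult (RtoC (Binomial.C j p)) (Cpowz (0, - kappa) (Z.of_nat j - Z.of_nat p - Z.of_nat n)))
          (RInt (V := CV) (fun t => Cmult (Lp p n x t) (cis (kappa * (t - x)))) a x)))) s
  (Cplus (Copp (csum n (fun q => csum (S j) (fun p =>
     if (j <=? q + p)%nat then Cmult (Cmult (RtoC (Binomial.C j p)) (Cpowz (0, - kappa) (Z.of_nat j - 1 - Z.of_nat p - Z.of_nat q)))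
          (Lp (S p) q s s + Lp p (S q) s s)%C else RtoC 0))))
   (csum (S j) (fun p => Cmult (Cmult (RtoC (Binomial.C j p)) (Cpowz (0, - kappa) (Z.of_nat j - Z.of_nat p - Z.of_nat n)))
          (Lp p n s s + RInt (V := CV) (fun t => Cmult (Lp (S p) n s t) (cis (kappa * (t - s)))) a s
             + (0, (- kappa)%R) * RInt (V := CV) (fun t => Cmult (Lp p n s t) (cis (kappa * (t - s)))) a s)%C))).
Proof.
  intros HC Ha Hj Hs.
  apply Dr_plus.
  - apply Dr_opp. apply Dr_csum'. intros q Hq. apply Dr_csum'. intros p Hp.
    destruct (j <=? q + p)%nat.
    + apply Dr_scal. apply (Dr_diag n L Lp a); auto; lia.
    + apply Dr_const.
  - apply Dr_csum'. intros p Hp. apply Dr_scal. apply (Dr_J n L Lp a kappa p s); auto; lia.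
Qed.


Lemma cis_add x y : (cis x * cis y)%C = cis (x + y).
Proof. unfold cis, Cmult. cbn [fst snd]. rewrite cos_plus, sin_plus. f_equal; ring. Qed.

Lemma Cpow_m1_sq j : (Cpow (RtoC (-1)) j * Cpow (RtoC (-1)) j)%C = RtoC 1.
Proof. rewrite <- Cpow_mult_l. replace (RtoC (-1) * RtoC (-1))%C with (RtoC 1) by (unfold RtoC, Cmult; cbn; f_equal; ring). apply Cpow_1_l. Qed.

Lemma ck_neq0 kappa : kappa <> 0 -> ((0, kappa) : C) <> RtoC 0.
Proof. intros H E. injection E. auto. Qed.

Lemma coef_eq kappa j : kappa <> 0 ->
  Cdiv (Cpow (RtoC (-1)) j) (Cpow (0, kappa) (S j)) = Copp (Cpowz (0, - kappa) (- Z.of_nat (S j))).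
Proof.
  intros Hk. unfold Cpowz. destruct (Z.leb_spec 0 (- Z.of_nat (S j))). lia.
  replace (Z.to_nat (- - Z.of_nat (S j))) with (S j) by lia.
  replace ((0, - kappa) : C) with (RtoC (-1) * (0, kappa))%C by (unfold RtoC, Cmult; cbn; f_equal; ring).
  rewrite Cpow_mult_l, Cpow_S.
  assert (Hm := Cpow_m1_sq j).
  assert (H1 : Cpow (RtoC (-1)) j <> RtoC 0) by (apply Cpow_nz; intro E; apply RtoC_inj in E; lra).
  assert (H2 : Cpow (0, kappa) (S j) <> RtoC 0) by (apply Cpow_nz; apply ck_neq0; auto).
  assert (Hi : (/ Cpow (RtoC (-1)) j)%C = Cpow (RtoC (-1)) j).
  { rewrite <- (Cmult_1_l (/ Cpow (RtoC (-1)) j)%C), <- Hm. field. auto. }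
  rewrite Cpow_S. unfold Cdiv.
  transitivity (/ Cpow (RtoC (-1)) j * / Cpow (0, kappa) (S j))%C. rewrite Hi. reflexivity.
  rewrite Cpow_S in H2 |- *. set (m := Cpow (RtoC (-1)) j) in *. set (P := Cpow (0, kappa) j) in *.
  set (z := ((0, kappa) : C)) in *. assert (Hz : z <> RtoC 0) by (apply ck_neq0; auto).
  assert (HP : P <> RtoC 0) by (intro E; apply H2; rewrite E; ring).
  field. repeat split; auto.
Qed.

Lemma ContI_ext f g : ContI f -> (forall t, inI t -> f t = g t) -> ContI g.
Proof.
  intros Hf E s Hs eps Heps. destruct (Hf s Hs eps Heps) as [d [Hd K]]. exists d. split; [auto|].
  intros t Ht Hts. rewrite <- !E by auto. auto.
Qed.

Lemma Cont2_cisk kappa : Cont2 (fun _ t => cis (kappa * t)).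
Proof.
  apply (Cont2_cis (fun _ t => kappa * t) (Rabs kappa)). apply Rabs_pos.
  intros x y s t. rewrite <- Rmult_minus_distr_l, Rabs_mult. apply Rmult_le_compat_l. apply Rabs_pos.
  pose proof (Rabs_pos (x - s)). lra.
Qed.

Lemma Dr_cisk kappa x0 : Dr (fun x => cis (kappa * x)) x0 ((0, kappa) * cis (kappa * x0))%C.
Proof.
  replace (fun x => cis (kappa * x)) with (fun x => cis (kappa * x + 0))
    by (apply functional_extensionality; intro; rewrite Rplus_0_r; auto).
  replace (kappa * x0) with (kappa * x0 + 0) by ring. apply Dr_cis.
Qed.

Lemma Cpowz_0 c : Cpowz c 0 = RtoC 1.
Proof. reflexivity. Qed.

Lemma Phi_deriv n L Lp a kappa s x0 : 1 < kappa -> Cn_I2 n L Lp -> inI a -> inI s -> inI x0 ->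
  Dr (fun x => sigma_n kappa n (fun j => Lp 0%nat j s) x * cis (kappa * x)
        + Cpowz (0, (- kappa)%R) (- Z.of_nat n) * RInt (V := CV) (fun t => Lp 0%nat n s t * cis (kappa * t))%C a x
        - RInt (V := CV) (fun t => L s t * cis (kappa * t))%C a x)%C x0 (RtoC 0).
Proof.
  intros Hk HC Ha Hs Hx0. pose proof HC as [H0 [Ht [Hsd Hc]]].
  assert (Hkn : kappa <> 0) by lra.
  assert (Hc0 : ((0, (- kappa)%R) : C) <> RtoC 0) by (intro E; injection E; lra).
  assert (CLn : ContI (fun t => Lp 0%nat n s t * cis (kappa * t))%C).
  { apply (Cont2_ContI_r (fun x t => Lp 0%nat n x t * cis (kappa * t))%C); auto.
    apply Cont2_mult. apply continuous_I2_Cont2; apply Hc; lia. apply Cont2_cisk. }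
  assert (CL : ContI (fun t => L s t * cis (kappa * t))%C).
  { apply (ContI_ext (fun t => Lp 0%nat 0%nat s t * cis (kappa * t))%C).
    apply (Cont2_ContI_r (fun x t => Lp 0%nat 0%nat x t * cis (kappa * t))%C); auto.
    apply Cont2_mult. apply continuous_I2_Cont2; apply Hc; lia. apply Cont2_cisk.
    intros t Ht0. rewrite H0; auto. }
  eapply Dr_val.
  apply Dr_minus. apply Dr_plus. apply Dr_mult.
  - unfold sigma_n. apply (Dr_csum' n _ (fun j => Cmult (Cdiv (Cpow (RtoC (-1)) j) (Cpow (0, kappa) (S j))) (Lp 0%nat (S j) s x0))).
    intros j Hj. apply Dr_scal. apply is_derive_I_Dr. apply Ht; auto.
  - apply Dr_cisk.
  - apply Dr_scal. apply FTC1; auto.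
  - apply FTC1; auto.
  - cbv beta. unfold sigma_n. rewrite <- H0 by auto.
    set (E := cis (kappa * x0)). set (X := fun j => Lp 0%nat j s x0).
    change (Lp 0%nat n s x0) with (X n). change (Lp 0%nat 0%nat s x0) with (X 0%nat).
    rewrite (csum_ext n _ (fun j => - Cpowz (0, (- kappa)%R) (- Z.of_nat (S j)) * X (S j))%C)
      by (intros; rewrite coef_eq by auto; unfold X; ring).
    rewrite (csum_ext n (fun j => Cmult (Cdiv (Cpow (RtoC (-1)) j) (Cpow (0, kappa) (S j))) (Lp 0%nat j s x0))
                (fun j => - Cpowz (0, (- kappa)%R) (- Z.of_nat (S j)) * X j)%C)
      by (intros; rewrite coef_eq by auto; unfold X; ring).
    assert (T : (csum n (fun j => - Cpowz (0, (- kappa)%R) (- Z.of_nat (S j)) * X (S j)) +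
                 (0, kappa) * csum n (fun j => - Cpowz (0, (- kappa)%R) (- Z.of_nat (S j)) * X j))%C
              = (Cpowz (0, (- kappa)%R) (- Z.of_nat 0) * X 0%nat - Cpowz (0, (- kappa)%R) (- Z.of_nat n) * X n)%C).
    { rewrite <- csum_scal, <- csum_plus.
      rewrite <- (csum_telescope n (fun j => Cpowz (0, (- kappa)%R) (- Z.of_nat j) * X j)%C).
      apply csum_ext. intros j Hj.
      rewrite (Cpowz_eq _ (- Z.of_nat j) (- Z.of_nat (S j) + 1)) by lia. rewrite Cpowz_succ by auto.
      replace ((0, (- kappa)%R) : C) with (- (0, kappa))%C by (unfold Copp; cbn; f_equal; ring). ring. }
    replace (- Z.of_nat 0)%Z with 0%Z in T by lia. rewrite Cpowz_0 in T.
    transitivity ((csum n (fun j => - Cpowz (0, (- kappa)%R) (- Z.of_nat (S j)) * X (S j)) +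
                 (0, kappa) * csum n (fun j => - Cpowz (0, (- kappa)%R) (- Z.of_nat (S j)) * X j)) * E
                 + Cpowz (0, (- kappa)%R) (- Z.of_nat n) * (X n * E) - X 0%nat * E)%C. ring.
    rewrite T. ring.
Qed.

Lemma G0_eq n L Lp a kappa s : 1 < kappa -> Cn_I2 n L Lp -> inI a -> inI s ->
  Cplus (Copp (csum n (fun q => csum (S 0) (fun p => if (0 <=? q + p)%nat then
     Cmult (Cmult (RtoC (Binomial.C 0 p)) (Cpowz (0, - kappa) (Z.of_nat 0 - 1 - Z.of_nat p - Z.of_nat q))) (Lp p q s s)
     else RtoC 0))))
   (csum (S 0) (fun p => Cmult (Cmult (RtoC (Binomial.C 0 p)) (Cpowz (0, - kappa) (Z.of_nat 0 - Z.of_nat p - Z.of_nat n)))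
     (RInt (V := CV) (fun t => Cmult (Lp p n s t) (cis (kappa * (t - s)))) a s)))
  = Cmult (Cminus (RInt (V := CV) (fun t => Cmult (L s t) (cis (kappa * t))) a s)
        (Copp (Cmult (cis (kappa * a)) (sigma_n kappa n (fun j => Lp O j s) a)))) (cis (- (kappa * s))).
Proof.
  intros Hk HC Ha Hs. pose proof HC as [H0 [Ht [Hsd Hc]]].
  assert (Hkn : kappa <> 0) by lra.
  assert (HP := Dr_zero_const _ s a (fun x Hx => Phi_deriv n L Lp a kappa s x Hk HC Ha Hs Hx) Hs Ha).
  cbv beta in HP.
  replace (RInt (V := CV) (fun t => Lp 0%nat n s t * cis (kappa * t))%C a a) with (RtoC 0) in HP
    by (rewrite (RInt_point (V := CV)); reflexivity).
  replace (RInt (V := CV) (fun t => L s t * cis (kappa * t))%C a a) with (RtoC 0) in HP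
    by (rewrite (RInt_point (V := CV)); reflexivity).
  set (I1 := RInt (V := CV) (fun t => Lp 0%nat n s t * cis (kappa * t))%C a s : C) in *.
  set (I0 := RInt (V := CV) (fun t => L s t * cis (kappa * t))%C a s : C) in *.
  change (RInt (V := CV) (fun t => Cmult (L s t) (cis (kappa * t))) a s) with I0.
  set (sa := sigma_n kappa n (fun j => Lp 0%nat j s) a) in *.
  assert (HJ : RInt (V := CV) (fun t => Cmult (Lp 0%nat n s t) (cis (kappa * (t - s)))) a s = (cis (- (kappa * s)) * I1)%C).
  { unfold I1. rewrite <- Ii_Cmult. apply Ii_ext. intros t _.
    replace (cis (kappa * (t - s))) with (cis (kappa * t) * cis (- (kappa * s)))%C
      by (rewrite cis_add; f_equal; ring). ring.
    apply ex_RInt_ContI; auto.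
    apply (Cont2_ContI_r (fun x t => Lp 0%nat n x t * cis (kappa * t))%C); auto.
    apply Cont2_mult. apply continuous_I2_Cont2; apply Hc; lia. apply Cont2_cisk. }
  rewrite !csum_Sl, !csum_0. cbn [Nat.leb Nat.add]. rewrite C_n_0.
  rewrite HJ.
  assert (Hss : sigma_n kappa n (fun j => Lp 0%nat j s) s =
     (- csum n (fun q => csum 1 (fun p => RtoC (Binomial.C 0 p) * Cpowz (0, (- kappa)%R) (Z.of_nat 0 - 1 - Z.of_nat p - Z.of_nat q) * Lp p q s s)))%C).
  { unfold sigma_n.
    replace (- csum n _)%C with (RtoC (-1) * csum n (fun q => csum 1 (fun p => RtoC (Binomial.C 0 p) * Cpowz (0, (- kappa)%R) (Z.of_nat 0 - 1 - Z.of_nat p - Z.of_nat q) * Lp p q s s)))%C by ring.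
    rewrite <- !csum_scal. apply csum_ext. intros q Hq.
    rewrite csum_Sl, csum_0, C_n_0.
    rewrite coef_eq by auto.
    rewrite (Cpowz_eq _ (Z.of_nat 0 - 1 - Z.of_nat 0 - Z.of_nat q) (- Z.of_nat (S q))) by lia. ring. }
  assert (HI0 : @eq C I0 (sigma_n kappa n (fun j => Lp 0%nat j s) s * cis (kappa * s) + Cpowz (0, (- kappa)%R) (- Z.of_nat n) * I1
      - (sa * cis (kappa * a) + Cpowz (0, (- kappa)%R) (- Z.of_nat n) * RtoC 0 - RtoC 0))%C) by (rewrite <- HP; ring).
  rewrite (Cpowz_eq _ (Z.of_nat 0 - Z.of_nat 0 - Z.of_nat n) (- Z.of_nat n)) by lia.
  rewrite HI0, Hss.
  assert (HE : cis (kappa * s) <> RtoC 0) by (intro E; pose proof (Cmod_cis (kappa * s)) as M; rewrite E, Cmod_0 in M; lra).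
  assert (HE' : cis (- (kappa * s)) = (/ cis (kappa * s))%C).
  { assert (EE : (cis (kappa * s) * cis (- (kappa * s)))%C = RtoC 1) by (rewrite cis_add, Rplus_opp_r; apply cis_0).
    rewrite <- (Cmult_1_l (/ cis (kappa * s))%C), <- EE. field. auto. }
  rewrite HE'. field. auto.
Qed.


Theorem lemma4p2 (kappa : R) (n : nat) (a : R) (L : R -> R -> C)
  (Lp : nat -> nat -> R -> R -> C) :
  1 < kappa -> inI a -> Cn_I2 n L Lp ->
  let ell := fun s => RInt (V := C_R_CompleteNormedModule)
                        (fun t => Cmult (L s t) (cis (kappa * t))) a s in
  let r := fun s => Copp (Cmult (cis (kappa * a)) (sigma_n kappa n (fun j => Lp O j s) a)) in
  let g := fun s => Cmult (Cminus (ell s) (r s)) (cis (- (kappa * s))) in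
  exists G : nat -> R -> C, derivs_I g n G /\
    forall l s, (l <= n)%nat -> inI s ->
      G l s =
      Cplus
        (Copp (csum n (fun q => csum (S l) (fun p =>
           if (l <=? q + p)%nat then
             Cmult (Cmult (RtoC (Binomial.C l p))
                          (Cpowz (0, - kappa) (Z.of_nat l - 1 - Z.of_nat p - Z.of_nat q)))
                   (Lp p q s s)
           else RtoC 0))))
        (csum (S l) (fun p =>
           Cmult (Cmult (RtoC (Binomial.C l p))
                        (Cpowz (0, - kappa) (Z.of_nat l - Z.of_nat p - Z.of_nat n)))
                 (RInt (V := C_R_CompleteNormedModule)
                    (fun t => Cmult (Lp p n s t) (cis (kappa * (t - s)))) a s))).
Proof.
  intros Hk Ha HC ell r g.
  exists (fun l s => Cplus
        (Copp (csum n (fun q => csum (S l) (fun p =>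
           if (l <=? q + p)%nat then
             Cmult (Cmult (RtoC (Binomial.C l p))
                          (Cpowz (0, - kappa) (Z.of_nat l - 1 - Z.of_nat p - Z.of_nat q)))
                   (Lp p q s s)
           else RtoC 0))))
        (csum (S l) (fun p =>
           Cmult (Cmult (RtoC (Binomial.C l p))
                        (Cpowz (0, - kappa) (Z.of_nat l - Z.of_nat p - Z.of_nat n)))
                 (RInt (V := C_R_CompleteNormedModule)
                    (fun t => Cmult (Lp p n s t) (cis (kappa * (t - s)))) a s)))).
  split; [split|].
  - intros s Hs. unfold g, r, ell. exact (G0_eq n L Lp a kappa s Hk HC Ha Hs).
  - intros j s Hj Hs. apply Dr_is_derive_I. eapply Dr_val.
    + apply (Dr_G n L Lp a kappa j s HC Ha Hj Hs).
    + assert (Hc0 : ((0, - kappa) : C) <> RtoC 0) by (intro E; injection E; lra).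
      exact (GStep (0, - kappa) n j (fun p q => Lp p q s s)
         (fun p => RInt (V := C_R_CompleteNormedModule) (fun t => Cmult (Lp p n s t) (cis (kappa * (t - s)))) a s) Hc0 Hj).
  - intros l s Hl Hs. reflexivity.
Qed.
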